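(* Let $(X,d)$ be a compact metric space, $f_{1,\infty}=(f_n)_{n=1}^\infty$ a sequence of continuous maps $f_n:X\to X$, and $(p_k)_{k=1}^\infty$ a sequence of positive integers. Let $(A_i)_{i=0}^\infty$ and $(B_i)_{i=0}^\infty$ be decreasing sequences of compact subsets of $X$ with $\bigcap_{i=0}^\infty A_i=\{a\}$ and $\bigcap_{i=0}^\infty B_i=\{b\}$, where $a\neq b$. Suppose that for every choice $c=(C_k)_k$ with $C_k\in\{A_k,B_k\}$ for each $k$, there exists $x_c\in X$ such that $f_1^{p_k}(x_c)\in C_k$ for all $k\ge 1$. Then $f_{1,\infty}$ is uniformly distributively chaotic in the sequence $(p_k)$.
   Context: For $n\in\mathbb{N}$, $f_1^n=f_n\circ\cdots\circ f_1$. For $x,y\in X$ and $t>0$ let $\Phi(f_{1,\infty},x,y,t,p_k)=\liminf_{n\to\infty}\frac1n\#\{1\le i\le n: d(f_1^{p_i}(x),f_1^{p_i}(y))<t\}$ and $\Phi^*(f_{1,\infty},x,y,t,p_k)=\limsup_{n\to\infty}\frac1n\#\{1\le i\le n: d(f_1^{p_i}(x),f_1^{p_i}(y))<t\}$. The system is uniformly distributively chaotic in the sequence $(p_k)$ if there exist an uncountable $S\subseteq X$ and $\varepsilon>0$ such that for all distinct $x,y\in S$: $\Phi(f_{1,\infty},x,y,\varepsilon,p_k)=0$ and $\Phi^*(f_{1,\infty},x,y,t,p_k)=1$ for all $t>0$. *)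

(* Defs.v *)
From Stdlib Require Import Reals List.
From Coquelicot Require Import Coquelicot.
Open Scope R_scope.

Definition is_metric {X : Type} (d : X -> X -> R) : Prop :=
  (forall x y, 0 <= d x y) /\
  (forall x y, d x y = 0 <-> x = y) /\
  (forall x y, d x y = d y x) /\
  (forall x y z, d x z <= d x y + d y z).

Definition d_open {X : Type} (d : X -> X -> R) (U : X -> Prop) : Prop :=
  forall x, U x -> exists r, 0 < r /\ forall y, d x y < r -> U y.

Definition d_compact {X : Type} (d : X -> X -> R) (K : X -> Prop) : Prop :=
  forall (I : Type) (U : I -> X -> Prop),
    (forall i, d_open d (U i)) ->
    (forall x, K x -> exists i, U i x) ->
    exists l : list I, forall x, K x -> exists i, In i l /\ U i x.

Definition d_continuous {X : Type} (d : X -> X -> R) (g : X -> X) : Prop :=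
  forall x eps, 0 < eps -> exists delta, 0 < delta /\
    forall y, d x y < delta -> d (g x) (g y) < eps.

(* f_1^n = f_n o ... o f_1 ; f_1^0 = id.  Only f 1, f 2, ... are used. *)
Fixpoint comp_seq {X : Type} (f : nat -> X -> X) (n : nat) (x : X) : X :=
  match n with
  | O => x
  | S m => f (S m) (comp_seq f m x)
  end.

Fixpoint close_count {X : Type} (d : X -> X -> R) (f : nat -> X -> X)
    (p : nat -> nat) (x y : X) (t : R) (n : nat) : R :=
  match n with
  | O => 0
  | S m => close_count d f p x y t m +
      (if Rlt_dec (d (comp_seq f (p (S m)) x) (comp_seq f (p (S m)) y)) t
       then 1 else 0)
  end.

(* the sequence n |-> (1/n) #{...}, indexed so that term k is the frequency at n = k+1 *)
Definition close_freq {X : Type} (d : X -> X -> R) (f : nat -> X -> X)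
    (p : nat -> nat) (x y : X) (t : R) (k : nat) : R :=
  close_count d f p x y t (S k) / INR (S k).

Definition Phi {X : Type} (d : X -> X -> R) (f : nat -> X -> X)
    (x y : X) (t : R) (p : nat -> nat) : Rbar :=
  LimInf_seq (close_freq d f p x y t).

Definition Phi_star {X : Type} (d : X -> X -> R) (f : nat -> X -> X)
    (x y : X) (t : R) (p : nat -> nat) : Rbar :=
  LimSup_seq (close_freq d f p x y t).

Definition uncountable {X : Type} (S : X -> Prop) : Prop :=
  ~ exists g : X -> nat, forall x y, S x -> S y -> g x = g y -> x = y.

Definition unif_distr_chaotic {X : Type} (d : X -> X -> R) (f : nat -> X -> X)
    (p : nat -> nat) : Prop :=
  exists (S : X -> Prop) (eps : R), uncountable S /\ 0 < eps /\
    forall x y, S x -> S y -> x <> y ->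
      Phi d f x y eps p = Finite 0 /\
      forall t, 0 < t -> Phi_star d f x y t p = Finite 1.

(* Main.v *)
Require Import Defs.
From Stdlib Require Import Reals List Lia Lra Arith.
From Stdlib Require Import Classical ClassicalEpsilon FunctionalExtensionality.
From Coquelicot Require Import Coquelicot.
Open Scope R_scope.

Definition mm (q : nat) : nat := (q - 2 ^ Nat.log2 q)%nat.
Definition blk (k : nat) : nat := Nat.log2 (Nat.log2 k).
Definition cseq (s : nat -> bool) (k : nat) : bool :=
  if Nat.even (blk k) then true else s (mm (Nat.div2 (blk k))).

Lemma sq_pow (j : nat) : (2 ^ (2 ^ S j) = 2 ^ (2 ^ j) * 2 ^ (2 ^ j))%nat.
Proof.
  rewrite <- Nat.pow_add_r. f_equal. simpl. lia.
Qed.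

Lemma pow_pos2 (n : nat) : (0 < 2 ^ n)%nat.
Proof. apply Nat.neq_0_lt_0, Nat.pow_nonzero. lia. Qed.

Lemma blk_spec (j k : nat) :
  (2 ^ (2 ^ j) <= k < 2 ^ (2 ^ S j))%nat -> blk k = j.
Proof.
  intros [H1 H2]. unfold blk.
  assert (Hk : (0 < k)%nat) by (pose proof (pow_pos2 (2^j)); lia).
  apply Nat.log2_unique; [lia|]. split.
  - apply Nat.log2_le_mono in H1. rewrite Nat.log2_pow2 in H1 by lia. exact H1.
  - exact (proj1 (Nat.log2_lt_pow2 k _ Hk) H2).
Qed.

Lemma mm_spec (m l : nat) : (m < 2 ^ l)%nat -> mm (2 ^ l + m) = m.
Proof.
  intros H. unfold mm.
  rewrite (Nat.log2_unique (2^l + m) l); [lia|lia|].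
  simpl. lia.
Qed.

Lemma block_odd (m0 big : nat) : exists j,
  (big < 2 ^ (2 ^ j))%nat /\ Nat.even j = false /\ mm (Nat.div2 j) = m0.
Proof.
  set (l := (big + m0)%nat).
  pose proof (Nat.pow_gt_lin_r 2 l ltac:(lia)) as Hl.
  exists (2 * (2 ^ l + m0) + 1)%nat. split; [|split].
  - set (j := (2 * (2 ^ l + m0) + 1)%nat).
    pose proof (Nat.pow_gt_lin_r 2 j ltac:(lia)).
    pose proof (Nat.pow_gt_lin_r 2 (2^j) ltac:(lia)).
    unfold j in *. lia.
  - apply Nat.even_odd.
  - rewrite Nat.add_1_r, Nat.div2_succ_double. apply mm_spec. lia.
Qed.

Lemma block_even (big : nat) : exists j,
  (big < 2 ^ (2 ^ j))%nat /\ Nat.even j = true.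
Proof.
  exists (2 * big)%nat. split; [|apply Nat.even_even].
  pose proof (Nat.pow_gt_lin_r 2 (2*big) ltac:(lia)).
  pose proof (Nat.pow_gt_lin_r 2 (2^(2*big)) ltac:(lia)). lia.
Qed.

Lemma cseq_odd s j k : Nat.even j = false ->
  (2 ^ (2 ^ j) <= k < 2 ^ (2 ^ S j))%nat -> cseq s k = s (mm (Nat.div2 j)).
Proof. intros He Hk. unfold cseq. rewrite (blk_spec j k Hk), He. reflexivity. Qed.

Lemma cseq_even s j k : Nat.even j = true ->
  (2 ^ (2 ^ j) <= k < 2 ^ (2 ^ S j))%nat -> cseq s k = true.
Proof. intros He Hk. unfold cseq. rewrite (blk_spec j k Hk), He. reflexivity. Qed.

Fixpoint lmax (l : list nat) : nat :=
  match l with nil => O | cons i r => Nat.max i (lmax r) end.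
Lemma lmax_in l i : In i l -> (i <= lmax l)%nat.
Proof. induction l; simpl; intros H; [easy|]. destruct H; subst; [lia|]. apply IHl in H. lia. Qed.

Fixpoint omax (l : list (option nat)) : nat :=
  match l with nil => O | cons None r => omax r | cons (Some i) r => Nat.max i (omax r) end.
Lemma omax_in l i : In (Some i) l -> (i <= omax l)%nat.
Proof. induction l as [|o l IH]; simpl; intros H; [easy|].
  destruct H; subst; [lia|]. apply IH in H. destruct o; lia. Qed.

Lemma compact_closed {X} (d : X -> X -> R) (K : X -> Prop) :
  is_metric d -> d_compact d K -> forall x, ~ K x ->
  exists r, 0 < r /\ forall y, d x y < r -> ~ K y.
Proof.
  intros [Hpos [Hz [Hsym Htri]]] HK x Hx.
  destruct (HK nat (fun n y => / INR (S n) < d x y)) as [l Hl].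
  - intros n y Hy. exists (d x y - / INR (S n)). split; [lra|].
    intros z Hz'. pose proof (Htri x z y). pose proof (Hsym y z). lra.
  - intros y Hy. assert (d x y <> 0) by (intro E; apply Hz in E; subst; auto).
    pose proof (Hpos x y).
    destruct (archimed_cor1 (d x y)) as [N [HN1 HN2]]; [lra|].
    exists (pred N). replace (S (pred N)) with N by lia. exact HN1.
  - exists (/ INR (S (lmax l))). split.
    + apply Rinv_0_lt_compat, lt_0_INR; lia.
    + intros y Hy Ky. destruct (Hl y Ky) as [i [Hi Hi']].
      apply lmax_in in Hi.
      assert (/ INR (S (lmax l)) <= / INR (S i)).
      { apply Rinv_le_contravar; [apply lt_0_INR; lia| apply le_INR; lia]. }
      lra.
Qed.

Lemma shrink {X} (d : X -> X -> R) (A : nat -> X -> Prop) (a : X) :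
  is_metric d -> d_compact d (fun _ => True) ->
  (forall i, d_compact d (A i)) ->
  (forall i x, A (S i) x -> A i x) ->
  (forall x, (forall i, A i x) <-> x = a) ->
  forall r, 0 < r -> exists N, forall i x, (N <= i)%nat -> A i x -> d a x < r.
Proof.
  intros Hm HX HA Hdec Hint r Hr.
  pose proof Hm as [Hpos [Hz [Hsym Htri]]].
  destruct (HX (option nat) (fun o y => match o with None => d a y < r | Some i => ~ A i y end))
    as [l Hl].
  - intros [i|] y Hy.
    + destruct (compact_closed d (A i) Hm (HA i) y Hy) as [e [He He']].
      exists e. split; auto.
    + exists (r - d a y). split; [lra|]. intros z Hz'. pose proof (Htri a y z). pose proof (Hsym a z). lra.
  - intros y _. destruct (classic (d a y < r)) as [H|H].
    + exists None. exact H.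
    + destruct (classic (forall i, A i y)) as [H'|H'].
      * apply Hint in H'. rewrite H' in H. exfalso. apply H. assert (d a a = 0) by (apply Hz; auto). lra.
      * apply not_all_ex_not in H'. destruct H' as [i Hi]. exists (Some i). exact Hi.
  - exists (omax l). intros i x Hi Ax.
    destruct (Hl x I) as [[j|] [Hj Hj']]; auto.
    exfalso. apply Hj'. apply omax_in in Hj.
    assert (forall n, A (j + n)%nat x -> A j x).
    { induction n; intros H. rewrite Nat.add_0_r in H; auto.
      apply IHn, Hdec. rewrite <- Nat.add_succ_r; auto. }
    apply (H (i - j)%nat). replace (j + (i - j))%nat with i by lia. auto.
Qed.

Lemma cc_bounds {X} (d : X -> X -> R) f p x y t n :
  0 <= close_count d f p x y t n <= INR n.
Proof.
  induction n; simpl close_count. simpl; lra.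
  rewrite S_INR. destruct Rlt_dec; lra.
Qed.

Lemma cc_zero {X} (d : X -> X -> R) f p x y t M n : (M <= n)%nat ->
  (forall i, (M < i <= n)%nat -> ~ d (comp_seq f (p i) x) (comp_seq f (p i) y) < t) ->
  close_count d f p x y t n = close_count d f p x y t M.
Proof.
  induction n; intros HM H.
  - replace M with O by lia. reflexivity.
  - destruct (Nat.eq_dec M (S n)) as [E|E]; [subst; reflexivity|].
    simpl close_count. rewrite IHn by (try lia; intros i Hi; apply H; lia).
    destruct Rlt_dec as [h|h]; [exfalso; apply (H (S n)); [lia|exact h]|lra].
Qed.

Lemma cc_one {X} (d : X -> X -> R) f p x y t M n : (M <= n)%nat ->
  (forall i, (M < i <= n)%nat -> d (comp_seq f (p i) x) (comp_seq f (p i) y) < t) ->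
  close_count d f p x y t n = close_count d f p x y t M + (INR n - INR M).
Proof.
  induction n; intros HM H.
  - replace M with O by lia. simpl. lra.
  - destruct (Nat.eq_dec M (S n)) as [E|E]; [subst; lra|].
    simpl close_count. rewrite IHn by (try lia; intros i Hi; apply H; lia).
    rewrite S_INR.
    destruct Rlt_dec as [h|h]; [lra|exfalso; apply h, H; lia].
Qed.

Lemma real_low (c n L e : R) : 0 <= c <= L -> n + 1 = L * L -> 2 <= L ->
  4 <= e * L -> 0 < e -> c / n < e.
Proof.
  intros Hc Hn HL HeL He.
  assert (n >= 3) by nra.
  assert (c < e * n).
  { destruct (Rle_lt_dec e L); nra. }
  apply (Rmult_lt_reg_r n); [lra|].
  unfold Rdiv. rewrite Rmult_assoc, Rinv_l, Rmult_1_r by lra. lra.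
Qed.

Lemma real_high (c n L e : R) : n - L <= c -> n + 1 = L * L -> 2 <= L ->
  4 <= e * L -> 0 < e -> 1 - e < c / n.
Proof.
  intros Hc Hn HL HeL He.
  assert (n >= 3) by nra.
  assert (L < e * n).
  { destruct (Rle_lt_dec e 1); nra. }
  apply (Rmult_lt_reg_r n); [lra|].
  unfold Rdiv. rewrite Rmult_assoc, Rinv_l, Rmult_1_r by lra. nra.
Qed.

Lemma freq_bounds {X} (d : X -> X -> R) f p x y t k :
  0 <= close_freq d f p x y t k <= 1.
Proof.
  unfold close_freq. pose proof (cc_bounds d f p x y t (S k)).
  assert (0 < INR (S k)) by (apply lt_0_INR; lia).
  split.
  - apply Rdiv_le_0_compat; lra.
  - apply (Rmult_le_reg_r (INR (S k))); auto. unfold Rdiv.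
    rewrite Rmult_assoc, Rinv_l, Rmult_1_r by lra. lra.
Qed.

Lemma arch4 (e : R) : 0 < e -> exists K, (0 < K)%nat /\ forall L, (K <= L)%nat -> 4 <= e * INR L.
Proof.
  intros He. destruct (archimed_cor1 (e/4)) as [K [HK1 HK2]]; [lra|].
  exists K. split; auto. intros L HL.
  assert (0 < INR K) by (apply lt_0_INR; lia).
  assert (INR K <= INR L) by (apply le_INR; lia).
  assert (INR K * / INR K = 1) by (apply Rinv_r; lra).
  nra.
Qed.

Theorem mainTheorem5 (X : Type) (d : X -> X -> R)
    (f : nat -> X -> X) (p : nat -> nat)
    (A B : nat -> X -> Prop) (a b : X) :
  is_metric d ->
  d_compact d (fun _ => True) ->
  (forall n, (1 <= n)%nat -> d_continuous d (f n)) ->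
  (forall k, (1 <= k)%nat -> (0 < p k)%nat) ->
  (forall i, d_compact d (A i)) ->
  (forall i, d_compact d (B i)) ->
  (forall i x, A (S i) x -> A i x) ->
  (forall i x, B (S i) x -> B i x) ->
  (forall x, (forall i, A i x) <-> x = a) ->
  (forall x, (forall i, B i x) <-> x = b) ->
  a <> b ->
  (forall c : nat -> bool, exists xc : X,
      forall k, (1 <= k)%nat ->
        (if c k then A k else B k) (comp_seq f (p k) xc)) ->
  unif_distr_chaotic d f p.
Proof.
  intros Hm HX _ _ HA HB HdA HdB HiA HiB Hab Hc.
  pose proof Hm as [Hpos [Hz [Hsym Htri]]].
  assert (Hpt : exists pt : (nat -> bool) -> X, forall (c : nat -> bool) (k : nat), (1 <= k)%nat ->
            (if c k then A k else B k) (comp_seq f (p k) (pt c))).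
  { exists (fun c => proj1_sig (constructive_indefinite_description _ (Hc c))).
    intros c k Hk. exact (proj2_sig (constructive_indefinite_description _ (Hc c)) k Hk). }
  destruct Hpt as [pt Hpt].
  set (r0 := d a b / 3).
  assert (Hr0 : 0 < r0).
  { unfold r0. pose proof (Hpos a b). assert (d a b <> 0) by (intro E; apply Hz in E; auto). lra. }
  destruct (shrink d A a Hm HX HA HdA HiA r0 Hr0) as [NA HNA].
  destruct (shrink d B b Hm HX HB HdB HiB r0 Hr0) as [NB HNB].
  assert (Hdis : forall s s' k, (1 <= k)%nat -> (NA <= k)%nat -> (NB <= k)%nat ->
     cseq s k <> cseq s' k ->
     ~ d (comp_seq f (p k) (pt (cseq s))) (comp_seq f (p k) (pt (cseq s'))) < r0).
  { intros s s' k H1 H2 H3 Hne.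
    pose proof (Hpt (cseq s) k H1) as P1. pose proof (Hpt (cseq s') k H1) as P2.
    set (X1 := comp_seq f (p k) (pt (cseq s))) in *.
    set (X2 := comp_seq f (p k) (pt (cseq s'))) in *.
    destruct (cseq s k), (cseq s' k); try congruence.
    - apply HNA in P1; auto. apply HNB in P2; auto.
      pose proof (Htri a X1 b). pose proof (Htri X1 X2 b). pose proof (Hsym X2 b).
      unfold r0 in *. lra.
    - apply HNB in P1; auto. apply HNA in P2; auto.
      pose proof (Htri a X2 b). pose proof (Htri X2 X1 b). pose proof (Hsym X2 X1).
      pose proof (Hsym X1 b). unfold r0 in *. lra. }
  assert (Hagr : forall t, 0 < t -> exists N, forall s s' k, (1 <= k)%nat -> (N <= k)%nat ->
     cseq s k = true -> cseq s' k = true ->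
     d (comp_seq f (p k) (pt (cseq s))) (comp_seq f (p k) (pt (cseq s'))) < t).
  { intros t Ht. destruct (shrink d A a Hm HX HA HdA HiA (t/2)) as [N HN]; [lra|].
    exists N. intros s s' k H1 H2 E1 E2.
    pose proof (Hpt (cseq s) k H1) as P1. pose proof (Hpt (cseq s') k H1) as P2.
    rewrite E1 in P1. rewrite E2 in P2.
    apply HN in P1; auto. apply HN in P2; auto.
    pose proof (Htri (comp_seq f (p k) (pt (cseq s))) a (comp_seq f (p k) (pt (cseq s')))).
    pose proof (Hsym a (comp_seq f (p k) (pt (cseq s)))). lra. }
  assert (Hsep : forall s s' m0, s m0 <> s' m0 -> forall big, exists L, (big < L)%nat /\
     forall k, (L <= k < L * L)%nat -> cseq s k <> cseq s' k).
  { intros s s' m0 Hm0 big. destruct (block_odd m0 big) as [j [Hj1 [Hj2 Hj3]]].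
    exists (2 ^ (2 ^ j))%nat. split; auto. intros k Hk.
    rewrite <- sq_pow in Hk.
    rewrite (cseq_odd s j k Hj2 Hk), (cseq_odd s' j k Hj2 Hk), Hj3. exact Hm0. }
  assert (Heven : forall big, exists L, (big < L)%nat /\
     forall s k, (L <= k < L * L)%nat -> cseq s k = true).
  { intros big. destruct (block_even big) as [j [Hj1 Hj2]].
    exists (2 ^ (2 ^ j))%nat. split; auto. intros s k Hk.
    rewrite <- sq_pow in Hk. exact (cseq_even s j k Hj2 Hk). }
  assert (Hdiff : forall s s' : nat -> bool, s <> s' -> exists m0, s m0 <> s' m0).
  { intros s s' H. apply NNPP. intro H'. apply H. apply functional_extensionality.
    intro m. apply NNPP. intro H''. apply H'. exists m. exact H''. }
  assert (Hinj : forall s s', pt (cseq s) = pt (cseq s') -> s = s').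
  { intros s s' E. apply NNPP. intro Hne. destruct (Hdiff s s' Hne) as [m0 Hm0].
    destruct (Hsep s s' m0 Hm0 (NA + NB + 1)%nat) as [L [HL1 HL2]].
    apply (Hdis s s' L); try lia.
    - apply HL2. nia.
    - rewrite E. assert (d (comp_seq f (p L) (pt (cseq s'))) (comp_seq f (p L) (pt (cseq s'))) = 0)
        by (apply Hz; auto). lra. }
  exists (fun x => exists s, x = pt (cseq s)), r0.
  split; [|split; [exact Hr0|]].
  - intros [g Hg].
    set (h := fun s => g (pt (cseq s))).
    assert (Hh : forall s s', h s = h s' -> s = s').
    { intros s s' E. apply Hinj, Hg; eauto. }
    set (inv := fun n => epsilon (inhabits (fun _ : nat => true)) (fun s => h s = n)).
    assert (Hinv : forall s, inv (h s) = s).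
    { intros s. apply Hh. unfold inv.
      apply (epsilon_spec (inhabits (fun _ : nat => true)) (fun s0 => h s0 = h s)). eauto. }
    set (diag := fun n => negb (inv n n)).
    assert (E : diag (h diag) = negb (diag (h diag))).
    { unfold diag at 1. rewrite Hinv. reflexivity. }
    destruct (diag (h diag)); discriminate.
  - intros x y [s Hx] [s' Hy] Hxy. subst x y.
    assert (Hss : s <> s') by (intro E; subst; auto).
    destruct (Hdiff s s' Hss) as [m0 Hm0].
    split.
    + unfold Phi. apply is_LimInf_seq_unique. intros e. split.
      * intros N. destruct (arch4 e (cond_pos e)) as [K [HK1 HK2]].
        destruct (Hsep s s' m0 Hm0 (NA + NB + N + K + 2)%nat) as [L [HL1 HL2]].
        exists (L * L - 2)%nat. split; [nia|].
        unfold close_freq. replace (S (L * L - 2)) with (L * L - 1)%nat by nia.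
        rewrite (cc_zero d f p _ _ r0 (L - 1)) by (try nia; intros i Hi;
          apply Hdis; try lia; apply HL2; lia).
        pose proof (cc_bounds d f p (pt (cseq s)) (pt (cseq s')) r0 (L - 1)).
        assert (INR (L - 1) <= INR L) by (apply le_INR; lia).
        assert (2 <= INR L) by (replace 2 with (INR 2) by (simpl; lra); apply le_INR; lia).
        rewrite Rplus_0_l. apply real_low with (INR L); try lra.
        -- rewrite <- mult_INR. rewrite <- S_INR. f_equal. nia.
        -- apply HK2. lia.
        -- apply cond_pos.
      * exists O. intros n _. pose proof (freq_bounds d f p (pt (cseq s)) (pt (cseq s')) r0 n).
        pose proof (cond_pos e). lra.
    + intros t Ht. destruct (Hagr t Ht) as [Nt HNt].
      unfold Phi_star. apply is_LimSup_seq_unique. intros e. split.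
      * intros N. destruct (arch4 e (cond_pos e)) as [K [HK1 HK2]].
        destruct (Heven (Nt + N + K + 2)%nat) as [L [HL1 HL2]].
        exists (L * L - 2)%nat. split; [nia|].
        unfold close_freq. replace (S (L * L - 2)) with (L * L - 1)%nat by nia.
        rewrite (cc_one d f p _ _ t (L - 1)) by (try nia; intros i Hi;
          apply HNt; try lia; apply HL2; lia).
        pose proof (cc_bounds d f p (pt (cseq s)) (pt (cseq s')) t (L - 1)).
        assert (INR (L - 1) <= INR L) by (apply le_INR; lia).
        assert (2 <= INR L) by (replace 2 with (INR 2) by (simpl; lra); apply le_INR; lia).
        apply real_high with (INR L); try lra.
        -- rewrite <- mult_INR. rewrite <- S_INR. f_equal. nia.
        -- apply HK2. lia.
        -- apply cond_pos.
      * exists O. intros n _. pose proof (freq_bounds d f p (pt (cseq s)) (pt (cseq s')) t n).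
        pose proof (cond_pos e). lra.
Qed.
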